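(* Let $M(n)$ denote the maximum cardinality of a set $\mathsf{B}\subseteq\{0,1\}^n$ such that any two distinct strings in $\mathsf{B}$ have a skewincidence. Then $$\lim_{n\to\infty}\frac{M(n)}{2^n}=1.$$
   Context: Two binary strings $\mathbf{x}=x_1\dots x_n$ and $\mathbf{y}=y_1\dots y_n$ in $\{0,1\}^n$ have a skew coincidence (skewincidence) if there is a coordinate $i\in[n-1]$ with $x_i=y_{i+1}=1$ or $x_{i+1}=y_i=1$. *)

(* Defs.v *)
From mathcomp Require Import all_boot.
From Stdlib Require Import Reals.
Set Implicit Arguments. Unset Strict Implicit. Unset Printing Implicit Defensive.

Definition bstring (n : nat) := {ffun 'I_n -> bool}.

(* Skew coincidence: some i with i+1 < n and
   (x_i = y_{i+1} = 1) or (x_{i+1} = y_i = 1).  (0-indexed version of i in [n-1]). *)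
Definition skewincidence (n : nat) (x y : bstring n) : bool :=
  [exists i : 'I_n, exists j : 'I_n,
     (val j == (val i).+1) && ((x i && y j) || (x j && y i))].

Definition skew_family (n : nat) (B : {set bstring n}) : bool :=
  [forall x in B, forall y in B, (x != y) ==> skewincidence x y].

Definition M (n : nat) : nat :=
  \max_(B : {set bstring n} | skew_family B) #|B|.

(* Main.v *)
Require Import Defs.
From mathcomp Require Import all_boot.
From mathcomp Require Import zify.
Set Implicit Arguments. Unset Strict Implicit. Unset Printing Implicit Defensive.

Lemma M_ge n (B : {set bstring n}) : skew_family B -> #|B| <= M n.
Proof. move=> H; rewrite /M; apply: (@leq_bigmax_cond _ (fun B : {set bstring n} => skew_family B) (fun B : {set bstring n} => #|B|)). exact: H. Qed.

Lemma M_le n : M n <= 2 ^ n.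
Proof.
apply/bigmax_leqP => B _.
apply: leq_trans (max_card _) _.
by rewrite card_ffun card_bool card_ord.
Qed.

Definition good n (B : {set bstring n}) :=
  skew_family B && [forall x in B, skewincidence x x].

Definition ext n (xb : bstring n * bool) : bstring n.+1 :=
  [ffun p => if unlift ord_max p is Some q then xb.1 q else xb.2].

Lemma ext_lift n xb (q : 'I_n) : ext xb (lift ord_max q) = xb.1 q.
Proof. by rewrite ffunE liftK. Qed.

Lemma ext_max n xb : ext (n:=n) xb ord_max = xb.2.
Proof. by rewrite ffunE unlift_none. Qed.

Lemma ext_inj n : injective (@ext n).
Proof.
move=> [x b] [y c] E.
have Hb : b = c by have := ext_max (x, b); rewrite E ext_max.
congr pair => //; apply/ffunP => q.
by have := ext_lift (x, b) q; rewrite E ext_lift.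
Qed.

Lemma skew_ext n (x y : bstring n) b c :
  skewincidence x y -> skewincidence (ext (x, b)) (ext (y, c)).
Proof.
case/existsP => i /existsP [j /andP [/eqP Hj H]].
apply/existsP; exists (lift ord_max i); apply/existsP; exists (lift ord_max j).
rewrite !ext_lift.
have E : forall k : 'I_n, val (lift ord_max k) = val k by move=> k; exact: lift_max.
rewrite !E.
rewrite Hj eqxx; exact: H.
Qed.

Lemma ext_step n (B : {set bstring n}) : good B ->
  exists B' : {set bstring n.+1}, good B' /\ #|B'| = 2 * #|B|.
Proof.
move=> /andP [/forallP Hs /forallP Hself].
exists (@ext n @: setX B [set: bool]); split; last first.
  rewrite card_imset; last exact: ext_inj.
  by rewrite cardsX cardsT card_bool mulnC.
apply/andP; split.
  apply/forallP => u; apply/implyP => /imsetP [[x b] /setXP [Hx _] ->].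
  apply/forallP => v; apply/implyP => /imsetP [[y c] /setXP [Hy _] ->].
  apply/implyP => _; apply: skew_ext.
  have [<-|nxy] := eqVneq x y; first by have := Hself x; rewrite Hx.
  by have := Hs x; rewrite Hx /= => /forallP /(_ y); rewrite Hy /= nxy.
apply/forallP => u; apply/implyP => /imsetP [[x b] /setXP [Hx _] ->].
by apply: skew_ext; have := Hself x; rewrite Hx.
Qed.

Lemma ext_many n (B : {set bstring n}) r : good B ->
  exists B' : {set bstring (n + r)}, good B' /\ #|B'| = 2 ^ r * #|B|.
Proof.
move=> HB; elim: r => [|r [B' [HB' HC]]].
  rewrite addn0; exists B; by rewrite expn0 mul1n.
have [B'' [H1 H2]] := ext_step HB'.
rewrite addnS; exists B''; split => //.
by rewrite H2 HC expnS mulnA.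
Qed.

Section Blocks.
Variables k l : nat.
Local Notation K := k.+1.
Local Notation L := l.+1.

Lemma pos_proof (b : 'I_K) (j : 'I_L) : b * L + j < K * L.
Proof. have := ltn_ord j; have := ltn_ord b; nia. Qed.

Definition pos (b : 'I_K) (j : 'I_L) : 'I_(K * L) := Ordinal (pos_proof b j).
Definition blk (p : 'I_(K * L)) : 'I_K := inord (p %/ L).
Definition off (p : 'I_(K * L)) : 'I_L := inord (p %% L).
Definition enc (F : {ffun 'I_K -> {ffun 'I_L -> bool}}) : bstring (K * L) :=
  [ffun p => F (blk p) (off p)].

Lemma encE F b j : enc F (pos b j) = F b j.
Proof.
rewrite ffunE; congr (F _ _); apply/val_inj; rewrite /= inordK /=.
- by rewrite (divnMDl _ _ (ltn0Sn l)) divn_small ?addn0 ?ltn_ord.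
- by rewrite (divnMDl _ _ (ltn0Sn l)) divn_small ?addn0 ?ltn_ord.
- by rewrite modnMDl modn_small ?ltn_ord.
- by rewrite ltn_mod.
Qed.

Lemma enc_inj : injective enc.
Proof.
move=> F G E; apply/ffunP => b; apply/ffunP => j.
by rewrite -!encE E.
Qed.

Definition S (j : 'I_L) : bool := (j %% 4 == 1) || (j %% 4 == 2).

Hypothesis L4 : 4 %| L.

Lemma S_nb (j : 'I_L) : exists j' : 'I_L, S j' /\ ((val j').+1 = j \/ (val j).+1 = j').
Proof.
have hj : val j < L := ltn_ord j.
have [t [r [Hr Ej]]] : exists t r, r < 4 /\ val j = 4 * t + r.
  exists (j %/ 4), (j %% 4); split; first by rewrite ltn_mod.
  by rewrite mulnC -divn_eq.
move: L4 => /dvdnP [c Hc].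
have Sv : forall (v : nat) (hv : v < L), v %% 4 = 1 \/ v %% 4 = 2 -> S (Ordinal hv).
  by move=> v hv [] H; rewrite /S /= H.
case: r Hr Ej => [|[|[|[|r]]]] // _ Ej.
- have hv : (val j).+1 < L by lia.
  exists (Ordinal hv); split; last by right.
  apply: Sv; left; rewrite Ej; lia.
- have hv : (val j).+1 < L by lia.
  exists (Ordinal hv); split; last by right.
  apply: Sv; right; rewrite Ej; lia.
- have hv : (val j).-1 < L by lia.
  exists (Ordinal hv); split; last by left; rewrite /= Ej; lia.
  apply: Sv; left; rewrite Ej; lia.
- have hv : (val j).-1 < L by lia.
  exists (Ordinal hv); split; last by left; rewrite /= Ej; lia.
  apply: Sv; right; rewrite Ej; lia.
Qed.


Definition nz (f : {ffun 'I_L -> bool}) := [exists j, f j].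
Definition isA (f : {ffun 'I_L -> bool}) := [forall j, S j ==> f j].

Lemma fold_prod (T : finType) (g : T -> nat) : foldr muln 1 [seq g x | x : T] = \prod_x g x.
Proof.
rewrite /image_mem -big_enum /= enumT.
elim: (Finite.enum T) => [|a s IH]; first by rewrite big_nil.
by rewrite big_cons /= IH.
Qed.

Lemma card_isA : #|[pred f | isA f]| = 2 ^ #|[pred j | ~~ S j]|.
Proof.
pose Fm := fun j : 'I_L => if S j then pred1 true else predT.
have -> : #|[pred f | isA f]| = #|family Fm|.
  apply: eq_card => f; rewrite inE /isA; apply/idP/familyP => [/forallP H j|H].
    rewrite /Fm; case Sj: (S j); rewrite inE /=; last done. by have := H j; rewrite Sj /= => ->.
  apply/forallP => j; apply/implyP => Sj; have := H j; rewrite /Fm Sj inE => /eqP.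
  by move=> ->.
rewrite card_family fold_prod -prod_nat_const [RHS]big_mkcond /=.
apply: eq_bigr => j _; rewrite /Fm inE; case: (S j) => /=.
  by rewrite -(card1 true); apply: eq_card => x; rewrite !inE.
by rewrite -card_bool; apply: eq_card => x; rewrite !inE.
Qed.


Definition D := [set F : {ffun 'I_K -> {ffun 'I_L -> bool}} |
  [forall b, nz (F b)] && [exists b, isA (F b)]].

Lemma skew_D F G : F \in D -> G \in D -> skewincidence (enc F) (enc G).
Proof.
rewrite !inE => /andP [_ /existsP [b HA]] /andP [/forallP HG _].
have /existsP [j Gj] := HG b.
have [j' [Sj' Hj']] := S_nb j.
have Fj' : F b j' by move/forallP: HA => /(_ j'); rewrite Sj'.
apply/existsP; case: Hj' => Hj'.
  exists (pos b j'); apply/existsP; exists (pos b j).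
  rewrite !encE Fj' Gj /= andbT -addnS; apply/eqP; congr addn; exact: esym Hj'.
exists (pos b j); apply/existsP; exists (pos b j').
rewrite !encE Fj' Gj /= orbT andbT -addnS; apply/eqP; congr addn; exact: esym Hj'.
Qed.

Lemma card_fT : #|{ffun 'I_L -> bool}| = 2 ^ L.
Proof. by rewrite card_ffun card_bool card_ord. Qed.

Lemma card_NZ : 2 ^ L - 1 <= #|[pred f | nz f]|.
Proof.
have := cardC [pred f | nz f]; rewrite card_fT => <-.
have : #|[predC [pred f | nz f]]| <= 1.
  rewrite -(card1 ([ffun => false] : {ffun 'I_L -> bool})); apply: subset_leq_card; apply/subsetP => f.
  rewrite !inE /nz => /existsPn H; apply/eqP/ffunP => j; rewrite ffunE.
  by apply/negbTE/H.
by move=> Hc; rewrite leq_subLR addnC leq_add2r.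
Qed.

Lemma card_NZnA : #|[pred f | nz f && ~~ isA f]| <= 2 ^ L - 2 ^ #|[pred j | ~~ S j]|.
Proof.
have := cardC [pred f | isA f]; rewrite card_fT card_isA => H.
have : #|[pred f | nz f && ~~ isA f]| <= #|[predC [pred f | isA f]]|.
  by apply: subset_leq_card; apply/subsetP => f; rewrite !inE => /andP [].
by move=> Hc; apply: (leq_trans Hc); rewrite -H addKn.
Qed.

Lemma card_fam (P : pred {ffun 'I_L -> bool}) :
  #|[set F : {ffun 'I_K -> {ffun 'I_L -> bool}} | [forall b, P (F b)]]| = #|P| ^ K.
Proof.
have := @card_ffun_on ('I_K) _ P; rewrite card_ord => <-; apply: eq_card => F; rewrite inE.
apply/forallP/familyP => H b; exact: H b.
Qed.

Lemma block_main : exists B : {set bstring (K * L)}, good B /\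
  (2 ^ L - 1) ^ K <= #|B| + (2 ^ L - 2 ^ #|[pred j | ~~ S j]|) ^ K.
Proof.
exists (enc @: D); split.
  apply/andP; split.
    apply/forallP => u; apply/implyP => /imsetP [F HF ->].
    apply/forallP => v; apply/implyP => /imsetP [G HG ->].
    by apply/implyP => _; apply: skew_D.
  apply/forallP => u; apply/implyP => /imsetP [F HF ->].
  exact: skew_D.
rewrite card_imset; last exact: enc_inj.
pose U := [set F : {ffun 'I_K -> {ffun 'I_L -> bool}} | [forall b, nz (F b)]].
pose V := [set F : {ffun 'I_K -> {ffun 'I_L -> bool}} | [forall b, nz (F b) && ~~ isA (F b)]].
have HD : D = U :\: V.
  apply/setP => F; rewrite !inE negb_forall.
  case: (boolP [forall b, nz (F b)]) => /= [/forallP Hn|]; last by rewrite andbF.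
  rewrite andbT; apply/existsP/existsP => [[b Hb]|[b Hb]]; exists b.
    by rewrite Hn Hb.
  by move: Hb; rewrite Hn /= negbK.
have HVU : V \subset U.
  by apply/subsetP => F; rewrite !inE => /forallP H; apply/forallP => b; case/andP: (H b).
have HU : #|U| = #|[pred f | nz f]| ^ K by exact: (card_fam [pred f | nz f]).
have HV : #|V| = #|[pred f | nz f && ~~ isA f]| ^ K by exact: (card_fam [pred f | nz f && ~~ isA f]).
have E1 : (2 ^ L - 1) ^ K <= #|U| by rewrite HU leq_exp2r // card_NZ.
have E2 : #|V| <= (2 ^ L - 2 ^ #|[pred j | ~~ S j]|) ^ K by rewrite HV leq_exp2r // card_NZnA.
have E3 : #|V| <= #|U| by exact: subset_leq_card.
rewrite HD cardsD (setIidPr HVU).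
lia.
Qed.


Lemma card_notS m : L = 4 * m -> 2 * m <= #|[pred j : 'I_L | ~~ S j]|.
Proof.
move=> HL.
pose g := fun t : 'I_(2 * m) => (inord (2 * t + odd t) : 'I_L).
have Hb : forall t : 'I_(2 * m), 2 * t + odd t < L.
  move=> t; have := ltn_ord t; case: (odd t) => /=; lia.
have gv : forall t, val (g t) = 2 * t + odd t by move=> t; rewrite /g /= inordK.
have ginj : injective g.
  move=> t u E; apply/val_inj => /=.
  have := gv t; have := gv u; rewrite E => ->.
  case: (odd t); case: (odd u) => /=; lia.
have := card_imset (mem [set: 'I_(2 * m)]) ginj.
rewrite cardsT card_ord => <-.
apply: subset_leq_card; apply/subsetP => j /imsetP [t _ ->].
rewrite inE /S gv.
have Ht := odd_double_half t.
case: (odd t) Ht => /= Ht; apply/negP => /orP [] /eqP; lia.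
Qed.

End Blocks.

Lemma expn_mono m n e : m <= n -> m ^ e <= n ^ e.
Proof. by case: e => [|e] H; [rewrite !expn0 | rewrite leq_exp2r]. Qed.

Lemma bern1 Z K : (Z.+1) ^ K.+1 <= Z ^ K * Z.+1 + K * (Z.+1) ^ K.
Proof.
elim: K => [|K IH]; first by rewrite !expn0 expn1; lia.
have H1 : Z ^ K <= Z.+1 ^ K by apply: expn_mono.
rewrite !expnS in IH *.
set a := Z ^ K in IH H1 *; set b := Z.+1 ^ K in IH H1 *.
nia.
Qed.

Lemma bern2 Y W K : W ^ K * (Y + W + K * Y) <= (Y + W) ^ K.+1.
Proof.
elim: K => [|K IH]; first by rewrite !expn0 expn1; lia.
rewrite expnS [(Y + W) ^ K.+2]expnS.
have H : W * (Y + W + K.+1 * Y) <= (Y + W) * (Y + W + K * Y) by nia.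
set a := W ^ K in IH *; set b := (Y + W) ^ K.+1 in IH *.
nia.
Qed.

Lemma key_count m n : 0 < m -> 2 ^ (3 * m) * (4 * m) <= n ->
  exists b, 2 ^ (n - 2 ^ (3 * m) * (4 * m)) * b <= M n /\
   exists s, 2 * m <= s /\
   (2 ^ (4 * m) - 1) ^ (2 ^ (3 * m)) <= b + (2 ^ (4 * m) - 2 ^ s) ^ (2 ^ (3 * m)).
Proof.
move=> m0 Hn.
have HK : (2 ^ (3 * m)).-1.+1 = 2 ^ (3 * m) by rewrite prednK // expn_gt0.
have HL : (4 * m).-1.+1 = 4 * m by rewrite prednK //; lia.
have L4 : 4 %| (4 * m).-1.+1 by rewrite HL dvdn_mulr.
have [B [HB Hc]] := @block_main (2 ^ (3 * m)).-1 (4 * m).-1 L4.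
have Hs := card_notS L4 HL.
set N0 := (2 ^ (3 * m)).-1.+1 * (4 * m).-1.+1 in B HB Hc.
have [B' [HB' HC']] := ext_many (n - N0) HB.
have HM := M_ge (proj1 (andP HB')).
have EN : N0 + (n - N0) = n by rewrite subnKC // /N0 HK HL.
have EM : M (N0 + (n - N0)) = M n by rewrite EN.
rewrite HC' EM in HM.
move: HM Hc Hs; move: (#|B|) (#|[pred j | ~~ S j]|) => b s HM Hc Hs.
exists b; split; first by move: HM; rewrite /N0 HK HL.
exists s; split => //.
by move: Hc; rewrite HK HL.
Qed.
Lemma core m b s : 0 < m -> 2 * m <= s ->
  (2 ^ (4 * m) - 1) ^ (2 ^ (3 * m)) <= b + (2 ^ (4 * m) - 2 ^ s) ^ (2 ^ (3 * m)) ->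
  (2 ^ (4 * m)) ^ (2 ^ (3 * m)) * (2 ^ m - 2) <= b * 2 ^ m.
Proof.
move=> m0 Hs Hc.
set K := 2 ^ (3 * m) in Hc *.
set X := 2 ^ (4 * m) in Hc *.
set T := 2 ^ m.
set Y := 2 ^ (2 * m).
have X0 : 0 < X by rewrite expn_gt0.
have KT : K * T = X by rewrite /K /T /X -expnD; congr expn; lia.
have KY : K * Y = X * T by rewrite /K /Y /X /T -!expnD; congr expn; lia.
have YX : Y <= X by rewrite /Y /X leq_exp2l //; lia.
set P := X ^ K.
set A := (X - 1) ^ K in Hc.
set W := (X - Y) ^ K.
have HW : (X - 2 ^ s) ^ K <= W.
  apply: expn_mono; apply: leq_sub2l; rewrite leq_exp2l //.
have H1 : P * T <= A * T + P.
  have := bern1 X.-1 K; rewrite prednK // -subn1 -/A expnS -/P.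
  move=> H; rewrite -(leq_pmul2l X0).
  have : X * P * T <= A * X * T + K * P * T by rewrite -!mulnDl leq_pmul2r ?expn_gt0.
  have E : K * P * T = X * P by rewrite mulnAC KT mulnC.
  rewrite E => H'. by rewrite mulnA mulnDr mulnA [X * A]mulnC.
have H2 : W * (1 + T) <= P.
  have := bern2 Y (X - Y) K; rewrite subnKC // expnS -/P -/W KY.
  by move=> H; rewrite -(leq_pmul2l X0) mulnCA mulnDr muln1.
have H3 : A * T <= b * T + W * T.
  rewrite -mulnDl leq_mul2r; apply/orP; right; apply: leq_trans Hc _.
  by rewrite leq_add2l.
rewrite mulnDr muln1 in H2.
rewrite mulnBr.
lia.
Qed.

Lemma final_nat m n : 0 < m -> 2 ^ (3 * m) * (4 * m) <= n ->
  2 ^ n * (2 ^ m - 2) <= M n * 2 ^ m.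
Proof.
move=> m0 Hn.
have [b [Hb [s [Hs Hc]]]] := key_count m0 Hn.
have H := core m0 Hs Hc.
have -> : 2 ^ n = 2 ^ (n - 2 ^ (3 * m) * (4 * m)) * (2 ^ (4 * m)) ^ (2 ^ (3 * m)).
  by rewrite -expnM -expnD; congr expn; lia.
rewrite -mulnA; apply: leq_trans (leq_mul (leqnn _) H) _.
by rewrite mulnA leq_mul2r Hb orbT.
Qed.

From Stdlib Require Import Reals Lra.

Lemma INR_expn a n : INR (expn a n) = (INR a ^ n)%R.
Proof.
elim: n => [|n IH]; first by rewrite expn0.
by rewrite expnS -multE mult_INR IH.
Qed.

Lemma INR_muln a b : INR (a * b) = (INR a * INR b)%R.
Proof. by rewrite -multE mult_INR. Qed.

Theorem corollary1 :
  Un_cv (fun n : nat => (INR (M n) / 2 ^ n)%R) 1%R.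
Proof.
move=> eps Heps.
have [N [HN N0]] := archimed_cor1 (eps / 2) ltac:(lra).
have N0' : 0 < N by apply/ltP.
exists (expn 2 (3 * N) * (4 * N)) => n Hn.
have Hn' : expn 2 (3 * N) * (4 * N) <= n by apply/leP.
have Hf := final_nat N0' Hn'.
have HT2 : 2 <= expn 2 N by rewrite -{1}(expn1 2) leq_exp2l.
have HNT : N <= expn 2 N by apply: ltnW; apply: ltn_expl.
have Hle := M_le n.
set Mn := M n in Hf Hle *.
have R1 : (INR (expn 2 n) * (INR (expn 2 N) - 2) <= INR Mn * INR (expn 2 N))%R.
  have := le_INR _ _ (elimT leP Hf).
  rewrite !INR_muln minus_INR; last by apply/leP.
  by [].
have R2 : (INR Mn <= INR (expn 2 n))%R by apply: le_INR; apply/leP.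
have R3 : (INR N <= INR (expn 2 N))%R by apply: le_INR; apply/leP.
have R4 : (2 <= INR (expn 2 N))%R by have := le_INR _ _ (elimT leP HT2).
have RN : (0 < INR N)%R by apply: lt_0_INR.
rewrite !INR_expn in R1 R2 R3 R4.
rewrite /R_dist.
set P := (INR 2 ^ n)%R in R1 R2 *.
set T := (INR 2 ^ N)%R in R1 R3 R4 *.
have HP : (0 < P)%R by rewrite /P; apply: pow_lt; simpl; lra.

have Hu1 : (INR Mn / P <= 1)%R.
  apply: (Rmult_le_reg_r P) => //; rewrite /Rdiv Rmult_assoc Rinv_l; lra.
have Hu2 : (1 - 2 / T <= INR Mn / P)%R.
  have HT : (0 < T)%R by lra.
  have E : (INR Mn / P - (1 - 2 / T) = (INR Mn * T - P * (T - 2)) / (P * T))%R by field; lra.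
  have : (0 <= (INR Mn * T - P * (T - 2)) / (P * T))%R.
    rewrite /Rdiv; apply: Rle_mult_inv_pos; [lra | apply: Rmult_lt_0_compat => //].
  lra.
have Hu3 : (2 / T < eps)%R.
  have : (2 / T <= 2 / INR N)%R.
    apply: Rmult_le_compat_l; first lra.
    apply: Rinv_le_contravar => //.
  have : (2 / INR N = 2 * / INR N)%R by [].
  lra.
apply: Rabs_def1; lra.
Qed.
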